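(* Let the $\mathbb{C}^*$-action on $\mathbb{P}^n$ be given by $\lambda\cdot[z_0:\dots:z_n]=[\lambda^{a_0}z_0:\dots:\lambda^{a_n}z_n]$ with integers $a_0\leq a_1\leq\dots\leq a_n$, not all equal. Let $X\subset\mathbb{P}^n$ be a smooth connected projective variety invariant under this action (with the induced action), and suppose $X^{\mathbb{C}^*}$ is finite. Let $F_1,\dots,F_r$ be the connected components of $(\mathbb{P}^n)^{\mathbb{C}^*}$, where $F_1$ is the component linearly spanned by the coordinate points $p_0,\dots,p_k$ (so $a_0=\dots=a_k<a_{k+1}$ and $\dim F_1=k$). Then $\#(X\cap F_1)\leq \dim F_1+1$.
   Context: $p_i\in\mathbb{P}^n$ denotes the coordinate point with $1$ in position $i$ and $0$ elsewhere. $(\mathbb{P}^n)^{\mathbb{C}^*}$ and $X^{\mathbb{C}^*}$ denote the sets of points fixed by every $\lambda\in\mathbb{C}^*$; the connected components of $(\mathbb{P}^n)^{\mathbb{C}^*}$ are the linear subspaces spanned by coordinate points with equal weight $a_i$. *)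

(* Defs.v *)
From HB Require Import structures.
From mathcomp Require Import all_boot all_order all_algebra.
From mathcomp Require mpoly.
From mathcomp Require Import reals complex.

Set Implicit Arguments.
Unset Strict Implicit.
Unset Printing Implicit Defensive.

Import Order.TTheory GRing.Theory Num.Theory.
Local Open Scope ring_scope.

(* The complex numbers: C = R[i] for R a realType (any complete archimedean
   ordered field, i.e. the reals up to isomorphism). *)
Definition CC (R : realType) : fieldType := complex R.

Section ProjGeom.
Variable K : fieldType.
Variable n : nat.   (* ambient projective space P^n, homogeneous coords 'I_n.+1 *)

Definition hpoint := 'I_n.+1 -> K.
Definition hpoly := mpoly.mpoly n.+1 K.

Definition nonzero (v : hpoint) : Prop := exists i, v i != 0.

Definition proportional (v w : hpoint) : Prop :=
  exists c : K, c != 0 /\ forall i, w i = c * v i.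

Definition ev (f : hpoly) (v : hpoint) : K := mpoly.meval v f.

Definition is_homog (f : hpoly) : Prop :=
  exists d : nat, forall m : mpoly.multinom n.+1, mpoly.mcoeff m f != 0 -> mpoly.mdeg m = d.

(* A subset of P^n, given as a predicate on homogeneous coordinate vectors. *)
Definition pset := hpoint -> Prop.

Definition psubset (Y Z : pset) : Prop := forall v, Y v -> Z v.

Definition zclosed (X : pset) : Prop :=
  exists S : hpoly -> Prop, (forall f, S f -> is_homog f) /\
    forall v, X v <-> (nonzero v /\ forall f, S f -> ev f v = 0).

Definition irreducible (X : pset) : Prop :=
  (exists v, X v) /\
  forall Y Z : pset, zclosed Y -> zclosed Z ->
    psubset X (fun v => Y v \/ Z v) -> psubset X Y \/ psubset X Z.

Definition proj_variety (X : pset) : Prop := zclosed X /\ irreducible X.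

Definition connected (X : pset) : Prop :=
  (exists v, X v) /\
  forall Y Z : pset, zclosed Y -> zclosed Z ->
    psubset X (fun v => Y v \/ Z v) ->
    (forall v, X v -> Y v -> Z v -> False) ->
    psubset X Y \/ psubset X Z.

Definition pssubset (Y Z : pset) : Prop :=
  psubset Y Z /\ exists v, Z v /\ ~ Y v.

Definition dim_ge (X : pset) (m : nat) : Prop :=
  exists Z : nat -> pset,
    (forall i, (i <= m)%N -> zclosed (Z i) /\ irreducible (Z i) /\ psubset (Z i) X) /\
    (forall i, (i < m)%N -> pssubset (Z i) (Z i.+1)).

Definition has_dim (X : pset) (d : nat) : Prop := dim_ge X d /\ ~ dim_ge X d.+1.

Definition vanishes_on (X : pset) (f : hpoly) : Prop := forall v, X v -> ev f v = 0.

Definition jacobian (r : nat) (fs : 'I_r -> hpoly) (p : hpoint) : 'M[K]_(r, n.+1) :=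
  \matrix_(j < r, i < n.+1) ev (mpoly.mderiv i (fs j)) p.

Definition jac_rank_ge (X : pset) (p : hpoint) (r : nat) : Prop :=
  exists fs : 'I_r -> hpoly, (forall j, vanishes_on X (fs j)) /\ row_free (jacobian fs p).

Definition jac_rank (X : pset) (p : hpoint) (r : nat) : Prop :=
  jac_rank_ge X p r /\ ~ jac_rank_ge X p r.+1.

(* Jacobian criterion: X of dimension d is smooth iff at every point the
   Jacobian of I(X) has rank n - d (codimension in P^n). *)
Definition smooth (X : pset) : Prop :=
  exists d, has_dim X d /\ forall p, X p -> jac_rank X p (n - d).

End ProjGeom.

Definition cstar_act (K : fieldType) (n : nat) (a : 'I_n.+1 -> int) (l : K)
  (v : hpoint K n) : hpoint K n := fun i => l ^ (a i) * v i.

Definition cstar_invariant (K : fieldType) (n : nat) (a : 'I_n.+1 -> int)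
  (X : pset K n) : Prop :=
  forall l : K, l != 0 -> forall v, X v -> X (cstar_act a l v).

Definition cstar_fixed (K : fieldType) (n : nat) (a : 'I_n.+1 -> int)
  (v : hpoint K n) : Prop :=
  forall l : K, l != 0 -> proportional v (cstar_act a l v).

Definition finite_fixed_locus (K : fieldType) (n : nat) (a : 'I_n.+1 -> int)
  (X : pset K n) : Prop :=
  exists (m : nat) (w : 'I_m -> hpoint K n),
    forall v, X v -> cstar_fixed a v -> exists j, proportional (w j) v.

(* the linear span of p_0, ..., p_k (among nonzero vectors) *)
Definition span_first (K : fieldType) (n k : nat) : pset K n :=
  fun v => nonzero v /\ forall i : 'I_n.+1, (k < i)%N -> v i = 0.

(* Main.v *)
Require Import Defs.
From HB Require Import structures.
From mathcomp Require Import all_boot all_order all_algebra.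
From mathcomp Require Import reals complex.
From mathcomp Require Import mpoly.
From mathcomp Require Import ring.
From Stdlib Require Import Classical FunctionalExtensionality PropExtensionality.
Import Order.TTheory GRing.Theory Num.Theory.
Local Open Scope ring_scope.

Set Implicit Arguments.
Unset Strict Implicit.

Section Gen.
Variable K : fieldType.
Variable n : nat.

Lemma is_homogP (f : hpoly K n) : is_homog f <-> exists d, f \is d.-homog.
Proof.
split=> [[d hd]|[d /dhomogP hd]]; exists d.
  by apply/dhomogP => m; rewrite mcoeff_msupp => /hd.
by move=> m mz; apply: hd; rewrite mcoeff_msupp.
Qed.

Lemma ev_scale (f : hpoly K n) d c (w : hpoint K n) :
  f \is d.-homog -> ev f (fun i => c * w i) = c ^+ d * ev f w.
Proof.
move=> /dhomogP hd; rewrite /ev !mevalE big_distrr /=.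
apply: eq_big_seq => m /hd md.
rewrite mulrCA; congr (_ * _).
under eq_bigr do rewrite exprMn.
by rewrite big_split /= prodrXr -mdegE md.
Qed.

Lemma ev_poly (f : hpoly K n) (v : hpoint K n) (b : 'I_n.+1 -> nat) (mu : K) :
  (\sum_(m <- msupp f) f@_m *: \prod_i ((v i)%:P * 'X^(b i)) ^+ m i).[mu]
  = ev f (fun i => v i * mu ^+ b i).
Proof.
rewrite /ev mevalE horner_sum; apply: eq_bigr => m _.
rewrite hornerZ horner_prod; congr (_ * _); apply: eq_bigr => i _.
by rewrite horner_exp hornerM hornerC hornerXn.
Qed.

Lemma zclosed_union (Y Z : pset K n) :
  zclosed Y -> zclosed Z -> zclosed (fun v => Y v \/ Z v).
Proof.
move=> [S [hS eS]] [T [hT eT]].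
exists (fun h => exists f g, S f /\ T g /\ h = f * g); split.
  move=> h [f [g [Sf [Tg ->]]]].
  have /is_homogP [d1 h1] := hS f Sf; have /is_homogP [d2 h2] := hT g Tg.
  apply/is_homogP; exists (d1 + d2)%N; exact: dhomogM.
move=> v; rewrite eS eT; split.
  case=> [[nz H]|[nz H]]; split=> // h [f [g [Sf [Tg ->]]]].
    by have := H f Sf; rewrite /ev mevalM => ->; rewrite mul0r.
  by have := H g Tg; rewrite /ev mevalM => ->; rewrite mulr0.
move=> [nz H].
case: (classic (forall f, S f -> ev f v = 0)) => [HS|HS]; [by left|right].
have [f0 Hf0] := not_all_ex_not _ _ HS.
have [Sf0 nf0] := imply_to_and _ _ Hf0.
split=> // g Tg.
have := H (f0 * g) (ex_intro _ f0 (ex_intro _ g (conj Sf0 (conj Tg erefl)))).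
rewrite /ev mevalM => /eqP; rewrite mulf_eq0 => /orP [/eqP|/eqP //].
by move=> e; exfalso; apply: nf0.
Qed.

Lemma zclosed_empty : zclosed (fun _ : hpoint K n => False).
Proof.
exists (fun f => f = 1); split.
  by move=> f ->; apply/is_homogP; exists 0%N; exact: dhomog1.
move=> v; split=> // [[_ H]].
by have := H 1 erefl; rewrite /ev meval1 => /eqP; rewrite oner_eq0.
Qed.

Lemma zclosed_bigU (Y : nat -> pset K n) N :
  (forall j, (j < N)%N -> zclosed (Y j)) ->
  zclosed (fun v => exists j, (j < N)%N /\ Y j v).
Proof.
elim: N => [|N IH] H.
  suff -> : (fun v => exists j, (j < 0)%N /\ Y j v) = (fun _ => False)
    by exact: zclosed_empty.
  by apply: functional_extensionality => v; apply: propositional_extensionality; split=> [[j []]|].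
suff -> : (fun v => exists j, (j < N.+1)%N /\ Y j v) =
   (fun v => (exists j, (j < N)%N /\ Y j v) \/ Y N v).
  apply: zclosed_union; last exact: H.
  by apply: IH => j jN; apply: H; apply: ltnW.
apply: functional_extensionality => v; apply: propositional_extensionality; split.
  move=> [j [jN Yj]]; rewrite ltnS leq_eqVlt in jN; case/orP: jN => [/eqP e|jN].
    by right; rewrite -e.
  by left; exists j.
by case=> [[j [jN Yj]]|YN]; [exists j; split=> //; apply: ltnW|exists N].
Qed.

Lemma irred_cover (X : pset K n) (Y : nat -> pset K n) N :
  irreducible X -> (forall j, (j < N)%N -> zclosed (Y j)) ->
  psubset X (fun v => exists j, (j < N)%N /\ Y j v) ->
  exists j, (j < N)%N /\ psubset X (Y j).
Proof.
move=> [[v0 Xv0] Hirr]; elim: N => [|N IH] HY Hc.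
  by have [j [] ] := Hc v0 Xv0.
have H1 : zclosed (fun v => exists j, (j < N)%N /\ Y j v).
  by apply: zclosed_bigU => j jN; apply: HY; apply: ltnW.
have [] := Hirr _ (Y N) H1 (HY N (ltnSn N)).
- move=> v Xv; have [j [jN Yj]] := Hc v Xv.
  rewrite ltnS leq_eqVlt in jN; case/orP: jN => [/eqP e|jN].
    by right; rewrite -e.
  by left; exists j.
- move=> Hs; have [j [jN Hj]] := IH (fun j jN => HY j (ltnW jN)) Hs.
  by exists j; split=> //; apply: ltnW.
- by move=> Hs; exists N.
Qed.


Lemma poly_nz_zero (natinj : forall i j : nat, (i%:R : K) = j%:R -> i = j)
  (P : {poly K}) : (forall mu : K, mu != 0 -> P.[mu] = 0) -> P = 0.
Proof.
move=> H; apply/eqP; apply/negPn/negP => nz.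
have nzn : forall i : nat, (i.+1%:R : K) != 0.
  move=> i; apply/eqP => e.
  have : (i.+1%:R : K) = 0%:R by rewrite e mulr0n.
  by move/natinj.
set rs := [seq (i.+1)%:R : K | i <- iota 0 (size P)].
have H1 : all (root P) rs.
  apply/allP => x /mapP [i _ ->]; apply/rootP; exact: H.
have H2 : uniq rs.
  rewrite map_inj_uniq ?iota_uniq // => i j /natinj; by case.
by have := max_poly_roots nz H1 H2; rewrite size_map size_iota ltnn.
Qed.

Definition Yzero k : pset K n :=
  fun x => nonzero x /\ forall i : 'I_n.+1, (i <= k)%N -> x i = 0.
Definition Ycross k (u : hpoint K n) : pset K n :=
  fun x => nonzero x /\ forall i i' : 'I_n.+1, (i <= k)%N -> (i' <= k)%N ->
    x i * u i' = x i' * u i.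
Definition blockz k (u : hpoint K n) := [forall i : 'I_n.+1, (i <= k)%N ==> (u i == 0)].
Definition Yj k u := if blockz k u then Yzero k else Ycross k u.

Lemma homogX1 (i : 'I_n.+1) : ('X_i : hpoly K n) \is 1.-homog.
Proof. by rewrite dhomogX; apply/eqP; exact: mdeg1. Qed.

Lemma zclosed_Yzero k : zclosed (Yzero k).
Proof.
exists (fun f => exists i : 'I_n.+1, (i <= k)%N /\ f = 'X_i); split.
  by move=> f [i [_ ->]]; apply/is_homogP; exists 1%N; exact: homogX1.
move=> v; split.
  move=> [nz H]; split=> // f [i [ik ->]]; by rewrite /ev mevalXU H.
move=> [nz H]; split=> // i ik.
by have := H 'X_i (ex_intro _ i (conj ik erefl)); rewrite /ev mevalXU.
Qed.

Lemma zclosed_Ycross k u : zclosed (Ycross k u).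
Proof.
exists (fun f => exists i i' : 'I_n.+1, (i <= k)%N /\ (i' <= k)%N /\
   f = u i' *: 'X_i - u i *: 'X_i'); split.
  move=> f [i [i' [_ [_ ->]]]]; apply/is_homogP; exists 1%N.
  by apply: rpredB; apply: dhomogZ; exact: homogX1.
move=> v; split.
  move=> [nz H]; split=> // f [i [i' [ik [ik' ->]]]].
  by rewrite /ev mevalB !mevalZ !mevalXU (mulrC (u i')) (mulrC (u i)) H // subrr.
move=> [nz H]; split=> // i i' ik ik'.
have := H _ (ex_intro _ i (ex_intro _ i' (conj ik (conj ik' erefl)))).
rewrite /ev mevalB !mevalZ !mevalXU => /eqP; rewrite subr_eq0 => /eqP.
by rewrite (mulrC (u i')) (mulrC (u i)).
Qed.

Lemma zclosed_Yj k u : zclosed (Yj k u).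
Proof. rewrite /Yj; case: ifP => _; [exact: zclosed_Yzero|exact: zclosed_Ycross]. Qed.

Lemma Yzero_span k v : span_first k v -> ~ Yzero k v.
Proof.
move=> [[i nzi] Hz] [_ H]; move: nzi; case: (leqP i k) => ik.
  by rewrite H // eqxx.
by rewrite Hz // eqxx.
Qed.

Lemma cross_prop k u v v' : ~~ blockz k u -> span_first k v -> span_first k v' ->
  Ycross k u v -> Ycross k u v' -> proportional v v'.
Proof.
move=> /forallPn [i0]; rewrite negb_imply => /andP [i0k ui0].
have key : forall x, span_first k x -> Ycross k u x -> x i0 != 0.
  move=> x [[i1 nz1] Hz] [_ H].
  have i1k : (i1 <= k)%N by rewrite leqNgt; apply/negP => /Hz e; rewrite e eqxx in nz1.
  apply/eqP => e0; have := H i1 i0 i1k i0k; rewrite e0 mul0r => /eqP.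
  by rewrite mulf_eq0 (negbTE nz1) (negbTE ui0).
move=> sv sv' Yv Yv'.
have nv := key _ sv Yv; have nv' := key _ sv' Yv'.
exists (v' i0 / v i0); split; first by rewrite mulf_neq0 // invr_eq0.
move=> i; case: (leqP i k) => ik; last first.
  by rewrite (proj2 sv i ik) (proj2 sv' i ik) mulr0.
case: Yv => _ Hv; case: Yv' => _ Hv'.
apply: (mulIf ui0); apply: (mulIf nv).
have e1 := Hv i i0 ik i0k; have e2 := Hv' i i0 ik i0k.
rewrite e2 -(mulrA _ (v i)) e1.
by field.
Qed.

Lemma span_fixed k (a : 'I_n.+1 -> int) a0 v :
  (forall i : 'I_n.+1, (i <= k)%N -> a i = a0) -> span_first k v -> @cstar_fixed K n a v.
Proof.
move=> Ha [_ Hz] l l0; exists (l ^ a0); split; first exact: expfz_neq0.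
move=> i; rewrite /cstar_act; case: (leqP i k) => ik; first by rewrite Ha.
by rewrite Hz // !mulr0.
Qed.

Lemma limit (natinj : forall i j : nat, (i%:R : K) = j%:R -> i = j)
  (a : 'I_n.+1 -> int) (b : 'I_n.+1 -> nat) (a0 : int) (X : pset K n) :
  zclosed X -> @cstar_invariant K n a X -> (forall i, a i = a0 + (b i)%:Z) ->
  forall v, X v -> nonzero (fun i => v i * 0 ^+ b i) -> X (fun i => v i * 0 ^+ b i).
Proof.
move=> [S [hS eS]] Hinv Hab v Xv nz; apply/eS; split=> // f Sf.
have /is_homogP [d hd] := hS f Sf.
set P := (\sum_(m <- msupp f) f@_m *: \prod_i ((v i)%:P * 'X^(b i)) ^+ m i).
rewrite -(ev_poly f v b 0) -/P.
suff -> : P = 0 by rewrite horner0.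
apply: poly_nz_zero => // mu mu0; rewrite /P ev_poly.
have := Hinv mu mu0 v Xv => /eS [_ /(_ f Sf)].
have -> : cstar_act a mu v = (fun i => mu ^ a0 * (v i * mu ^+ b i)).
  apply: functional_extensionality => i; rewrite /cstar_act Hab expfzDr //.
  by rewrite -mulrA [_ * v i]mulrC.
rewrite (ev_scale _ _ hd) => /eqP; rewrite mulf_eq0 expf_eq0 (negbTE (expfz_neq0 _ mu0)) andbF /=.
by move/eqP.
Qed.

End Gen.

Theorem proposition4 (R : realType) (n : nat) (a : 'I_n.+1 -> int) (k : nat)
  (X : pset (CC R) n) :
  (* a_0 <= a_1 <= ... <= a_n, not all equal *)
  (forall i j : 'I_n.+1, (i <= j)%N -> a i <= a j) ->
  (exists i j : 'I_n.+1, a i != a j) ->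
  (* a_0 = ... = a_k < a_{k+1} *)
  (forall i : 'I_n.+1, (i <= k)%N -> a i = a ord0) ->
  (forall i : 'I_n.+1, nat_of_ord i = k.+1 -> a ord0 < a i) ->
  (* X smooth connected projective variety, C^*-invariant, finite fixed locus *)
  proj_variety X -> smooth X -> connected X ->
  cstar_invariant a X ->
  finite_fixed_locus a X ->
  (* #(X cap F_1) <= dim F_1 + 1 = k + 1 *)
  forall (m : nat) (w : 'I_m -> hpoint (CC R) n),
    (forall j, X (w j) /\ @span_first (CC R) n k (w j)) ->
    (forall j j', j != j' -> ~ proportional (w j) (w j')) ->
    (m <= k.+1)%N.
Proof.
move=> Hsort _ Hblock Hnext [HXc HXirr] _ _ Hinv [N [u Hfin]] m w Hw Hnp.
case: (leqP m 1) => [m1|m2]; first exact: leq_trans m1 _.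
exfalso.
have natinj : forall i j : nat, (i%:R : CC R) = j%:R -> i = j.
  by move=> i j; rewrite /CC => /eqP; rewrite eqr_nat => /eqP.
set a0 := a ord0.
pose b (i : 'I_n.+1) := `|a i - a0|%N.
have Hab : forall i, a i = a0 + (b i)%:Z.
  move=> i; rewrite /b gez0_abs ?subr_ge0 ?Hsort //.
  by rewrite addrCA subrr addr0.
have bk : forall i : 'I_n.+1, (b i == 0%N) = (i <= k)%N.
  move=> i; case: (leqP i k) => ik.
    by rewrite /b Hblock // subrr.
  apply/negbTE; rewrite -lt0n -(ltz_nat 0) -[((b i)%:Z)]/((b i)%:Z).
  have -> : ((b i)%:Z) = a i - a0 by rewrite Hab addrC addKr.
  rewrite subr_gt0.
  have kn : (k.+1 < n.+1)%N by apply: leq_ltn_trans ik (ltn_ord i).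
  apply: (lt_le_trans (Hnext (Ordinal kn) erefl)); exact: Hsort.
set Y := fun j : nat => match @insub _ (fun x => (x < N)%N) 'I_N j with
                        | Some jj => Yj k (u jj) | None => Yzero (K:=CC R) (n:=n) k end.
have HY : forall j, (j < N.+1)%N -> zclosed (Y j).
  move=> j _; rewrite /Y; case: insub => [jj|]; [exact: zclosed_Yj|exact: zclosed_Yzero].
have [HS [S [hS eS]]] : zclosed X /\ zclosed X by split.
have Hcov : psubset X (fun v => exists j, (j < N.+1)%N /\ Y j v).
  move=> x Xx; have nzx : nonzero x by case: (eS x) => /(_ Xx) [].
  set x' := fun i => x i * 0 ^+ b i.
  have x'k : forall i : 'I_n.+1, (i <= k)%N -> x' i = x i.
    by move=> i ik; rewrite /x' (eqP (_ : b i == 0%N)) ?bk // expr0 mulr1.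
  have x'z : forall i : 'I_n.+1, (k < i)%N -> x' i = 0.
    move=> i ik; rewrite /x' expr0n.
    have -> : (b i == 0%N) = false by rewrite bk leqNgt ik.
    by rewrite mulr0.
  case: (classic (nonzero x')) => nz'.
    have Xx' : X x' := limit natinj HS Hinv Hab Xx nz'.
    have sx' : span_first k x' by split.
    have [jj [c [c0 Hc]]] := Hfin x' Xx' (span_fixed Hblock sx').
    exists (val jj); split; first exact: ltnW (ltn_ord jj).
    rewrite /Y valK /Yj.
    have nb : blockz k (u jj) = false.
      apply/negbTE/forallPn; case: nz' => i nzi.
      have ik : (i <= k)%N by rewrite leqNgt; apply/negP => /x'z e; rewrite e eqxx in nzi.
      exists i; rewrite negb_imply ik /=; apply/eqP => e.
      by move: nzi; rewrite Hc e mulr0 eqxx.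
    rewrite nb; split=> // i i' ik ik'.
    by rewrite -(x'k i ik) -(x'k i' ik') !Hc mulrAC [c * _ * _]mulrAC.
  exists N; split=> //.
  rewrite /Y insubF ?ltnn //; split=> // i ik.
  rewrite -x'k //; apply/eqP; apply/negPn/negP => h; apply: nz'; by exists i.
have [j [jN Hj]] := irred_cover HXirr HY Hcov.
pose j0 : 'I_m := Ordinal (ltnW m2).
pose j1 : 'I_m := Ordinal m2.
have [Xw0 sw0] := Hw j0; have [Xw1 sw1] := Hw j1.
move: Hj; rewrite /Y; case: insub => [jj|] Hj; last first.
  exact: Yzero_span sw0 (Hj _ Xw0).
move: Hj; rewrite /Yj; case: ifP => hb Hj.
  exact: Yzero_span sw0 (Hj _ Xw0).
apply: (Hnp j0 j1) => //.
exact: cross_prop (negbT hb) sw0 sw1 (Hj _ Xw0) (Hj _ Xw1).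
Qed.
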